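(* For every integer $n\ge 1$, let $\overline{P}(n)_2$ be the $n\times n$ integer matrix with entries $\overline{p}_{i,j}\in\{0,1\}$, $0\le i,j<n$, defined by $\overline{p}_{i,j}\equiv\binom{i+j}{i}\pmod 2$. Then the determinant over $\mathbf{Z}$ satisfies $$\det(\overline{P}(n)_2)=\prod_{k=0}^{n-1}(-1)^{s_k},$$ where $s_k$ is the Thue–Morse sequence.
   Context: The Thue–Morse sequence is defined by $s_k=\sum_i\nu_i \pmod 2\in\{0,1\}$ where $k=\sum_i \nu_i 2^i$ is the binary expansion of $k$; equivalently $s_0=0$, $s_{2k}=s_k$, $s_{2k+1}=1-s_k$. *)

(* Defs.v *)
From mathcomp Require Import all_boot all_order all_algebra.
Set Implicit Arguments. Unset Strict Implicit. Unset Printing Implicit Defensive.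
Import GRing.Theory.

(* Thue-Morse: s_k = (sum of binary digits of k) mod 2.
   The binary digits of k are (k %/ 2^i) %% 2 for i < k.+1 (k < 2^(k+1)). *)
Definition thue_morse (k : nat) : nat :=
  (\sum_(i < k.+1) (k %/ 2 ^ i) %% 2) %% 2.

Definition Pbar2 (n : nat) : 'M[int]_n :=
  \matrix_(i < n, j < n) (Posz ('C(i + j, i) %% 2)).

(* Main.v *)
Require Import Defs.
From mathcomp Require Import all_boot all_order all_algebra ring.
Import GRing.Theory.

Lemma odd_of_even k : (forall c, odd 'C(k.*2, c.*2) = odd 'C(k, c) /\ odd 'C(k.*2, c.*2.+1) = false) ->
   forall c, odd 'C(k.*2.+1, c.*2) = odd 'C(k, c) /\ odd 'C(k.*2.+1, c.*2.+1) = odd 'C(k, c).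
Proof.
move=> H [|c].
  have [_ h2] := H 0; rewrite !bin0 binS oddD h2 double0 bin0; by split.
have [h1 h2] := H c.+1; have [h3 h4] := H c.
rewrite doubleS binS oddD h1 -doubleS h4 addbF; split=> //.
by rewrite binS oddD h1 h2.
Qed.

Lemma even_facts m c : odd 'C(m.*2, c.*2) = odd 'C(m, c) /\ odd 'C(m.*2, c.*2.+1) = false.
Proof.
elim: m c => [|m IH] c.
  by rewrite double0 !bin0n; case: c.
have Ho := odd_of_even m IH.
rewrite doubleS; split.
  case: c => [|c]; first by rewrite !bin0.
  have [h1 h2] := Ho c.+1; have [h3 h4] := Ho c.
  by rewrite doubleS binS oddD -doubleS h1 h4 [in RHS]binS oddD.
have [h1 h2] := Ho c.
by rewrite binS oddD h1 h2 addbb.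
Qed.

Lemma lucas a c (d e : bool) : odd 'C(d + a.*2, e + c.*2) = (e <= d) && odd 'C(a, c).
Proof.
have [h1 h2] := even_facts a c; have [h3 h4] := odd_of_even a (even_facts a) c.
by case: d; case: e; rewrite /= ?add0n ?add1n.
Qed.
Local Open Scope ring_scope.
Definition ds (k N : nat) : nat := (\sum_(i < N) (k %/ 2 ^ i) %% 2)%N.

Lemma ds_ext k d : ds k (k + d) = ds k k.
Proof.
elim: d => [|d IH]; first by rewrite addn0.
rewrite /ds addnS big_ord_recr /= -/(ds k (k + d)) IH divn_small ?mod0n ?addn0 //.
apply: (leq_trans (ltn_expl k (isT : (1 < 2)%N))).
by rewrite leq_exp2l // leq_addr.
Qed.

Lemma ds_le k N : (k <= N)%N -> ds k N = ds k k.
Proof. by move=> h; by rewrite -(subnKC h) ds_ext. Qed.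

Lemma ds_step (b : bool) a N : ds (b + a.*2) N.+1 = (b + ds a N)%N.
Proof.
rewrite /ds big_ord_recl /= expn0 divn1 modn2 oddD odd_double addbF; congr (_ + _)%N.
  by case: b.
apply: eq_bigr => i _; rewrite /bump /= add1n expnS divnMA divn2 half_bit_double //.
Qed.

Lemma tm_step (b : bool) a :
  (-1 : int) ^+ thue_morse (b + a.*2) = (-1) ^+ thue_morse a * (-1) ^+ b.
Proof.
rewrite /thue_morse -/(ds _ _) -/(ds a a.+1) !modn2 !signr_odd ds_step.
have h : (a <= b + a.*2)%N by rewrite -addnn addnA leq_addl.
rewrite (ds_le _ _ h) (ds_le _ _ (leqnSn a)) exprD mulrC //.
Qed.
Definition G (i j k : nat) : int :=
  (odd 'C(i, k) : nat)%:Z * (-1) ^+ thue_morse k * (odd 'C(j, k) : nat)%:Z.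
Definition S i j N := \sum_(k < N) G i j k.

Lemma S_ext i j d : S i j (i.+1 + d) = S i j i.+1.
Proof.
elim: d => [|d IH]; first by rewrite addn0.
rewrite /S addnS big_ord_recr /= -/(S i j (i.+1 + d)) IH /G bin_small ?mul0r ?addr0 //.
by rewrite ltnS leq_addr.
Qed.

Lemma S_le i j N : (i < N)%N -> S i j N = S i j i.+1.
Proof. by move=> h; rewrite -(subnKC h) S_ext. Qed.

Lemma sum_split (F : nat -> int) N :
  \sum_(k < N.*2) F k = \sum_(c < N) (F c.*2 + F c.*2.+1).
Proof.
elim: N => [|N IH]; first by rewrite !big_ord0.
by rewrite doubleS !big_ord_recr /= IH addrA.
Qed.

Lemma G_even (b d : bool) a c k : G (b + a.*2) (d + c.*2) k.*2 = G a c k.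
Proof.
rewrite /G -[k.*2]/(false + k.*2)%N !lucas tm_step /=; ring.
Qed.

Lemma G_odd (b d : bool) a c k :
  G (b + a.*2) (d + c.*2) k.*2.+1 = - ((b && d) : nat)%:Z * G a c k.
Proof.
rewrite /G -[k.*2.+1]/(true + k.*2)%N !lucas tm_step /=.
by case: b; case: d => /=; ring.
Qed.

Lemma key i j : ((odd 'C(i + j, i)) : nat)%:Z = S i j i.+1.
Proof.
elim/ltn_ind: i j => i IH j.
case: i IH => [|i'] IH.
  have t0 : thue_morse 0 = 0%N by rewrite /thue_morse big_ord1.
  by rewrite /S big_ord1 /G !bin0 /= t0 expr0 !mulr1.
set i := i'.+1.
have lt : (i./2 < i)%N by rewrite ltn_half_double -addnn -addn1 leq_add2l.
have := IH _ lt; move: lt (odd_double_half i) (odd_double_half j).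
move: (odd i) (i./2) (odd j) (j./2) => b a d c lt <- <- IHa.
have hN : (b + a.*2 < a.+1.*2)%N by rewrite doubleS ltnS; case: b.
rewrite -(S_le _ _ _ hN) /S sum_split.
under eq_bigr => k _ do rewrite G_even G_odd -[X in X + _]mul1r -mulrDl.
rewrite -mulr_sumr -/(S a c a.+1) -IHa.
have -> : (b + a.*2 + (d + c.*2) = (b + d) + (a + c).*2)%N.
  by rewrite doubleD; ring.
clear hN IH lt; case: b; case: d => /=.
- have -> : (1 + 1 + (a + c).*2 = false + (a + c).+1.*2)%N by rewrite doubleS.

  by rewrite -[(1 + a.*2)%N]/(true + a.*2)%N lucas /=; ring.
- by rewrite -[(1 + 0 + (a + c).*2)%N]/(true + (a + c).*2)%N -[(1 + a.*2)%N]/(true + a.*2)%N lucas /=; ring.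
- by rewrite -[(0 + 1 + (a + c).*2)%N]/(true + (a + c).*2)%N -[(0 + a.*2)%N]/(false + a.*2)%N lucas /=; ring.
- by rewrite -[(0 + 0 + (a + c).*2)%N]/(false + (a + c).*2)%N -[(0 + a.*2)%N]/(false + a.*2)%N lucas /=; ring.
Qed.

Definition Lmat n : 'M[int]_n := \matrix_(i < n, k < n) (odd 'C(i, k) : nat)%:Z.
Definition dv n : 'rV[int]_n := \row_(k < n) (-1) ^+ thue_morse k.

Lemma Pbar2_dec n : Pbar2 n = Lmat n *m diag_mx (dv n) *m (Lmat n)^T.
Proof.
apply/matrixP => i j; rewrite !mxE modn2 key -(S_le _ _ n (ltn_ord i)) /S mul_mx_diag.
apply: eq_bigr => k _; rewrite !mxE /G.
done.
Qed.

Lemma det_Lmat n : \det (Lmat n) = 1.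
Proof.
rewrite det_trig.
  by apply: big1 => i _; rewrite mxE binn.
apply/forallP => i; apply/forallP => j; apply/implyP => lt.
by rewrite mxE bin_small.
Qed.

Theorem theorem1p1 (n : nat) (hn : (1 <= n)%N) :
  \det (Pbar2 n) = \prod_(k < n) (-1 : int) ^+ thue_morse k.
Proof.
rewrite Pbar2_dec !det_mulmx det_tr det_Lmat det_diag mul1r mulr1.
by apply: eq_bigr => k _; rewrite mxE.
Qed.
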